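(* Let $\nabla:\Omega(A)\to\Omega(A)\otimes_A\Omega(A)$ be a module connection with associated affine connection $(\mathsf K_\nabla,\mathsf H_\nabla)$ and torsion $\mathsf V$. Then for all $a\in A$, $2\,\widehat\nabla(\mathsf d(a))=\widehat\phi(\mathsf V(\mathsf d(a)))$.
   Context: Fix a commutative ring $R$ and a commutative $R$-algebra $A$; $\Omega(A)$ is the Kähler module of $A$ over $R$ with universal derivation $\mathsf d$, and $\Omega^2(A)=\Omega(A)\wedge_A\Omega(A)$. A module connection on $\Omega(A)$ is an $R$-linear $\nabla:\Omega(A)\to\Omega(A)\otimes_A\Omega(A)$ with $\nabla(a\alpha)=a\nabla(\alpha)+\mathsf d(a)\otimes\alpha$. $\mathsf T(A)=\mathrm{Sym}_A(\Omega(A))$ (which equals the symmetric algebra $\mathsf S_A(\Omega(A))$), $\mathsf T^2(A)=\mathsf T(\mathsf T(A))$ with universal derivation $\mathsf d':\mathsf T(A)\to\mathsf T^2(A)$, generated over $A$ by $\mathsf d(a),\mathsf d'(a),\mathsf d'\mathsf d(a)$; $\mathsf c_A:\mathsf T^2(A)\to\mathsf T^2(A)$ is the algebra map $a\mapsto a$, $\mathsf d(a)\mapsto\mathsf d'(a)$, $\mathsf d'(a)\mapsto\mathsf d(a)$, $\mathsf d'\mathsf d(a)\mapsto\mathsf d'\mathsf d(a)$. The associated affine connection (a tangent category connection on the tangent bundle of $A$ in affine schemes) has vertical part the algebra map $\mathsf K_\nabla:\mathsf T(A)\to\mathsf T^2(A)$, $a\mapsto a$, $\mathsf d(a)\mapsto\mathsf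 d'\mathsf d(a)-U'(\nabla(\mathsf d a))$, and horizontal part $\mathsf H_\nabla:\mathsf T^2(A)\to\mathsf T(A)\otimes_A\mathsf T(A)$ with $\mathsf H_\nabla(\mathsf d'\mathsf d(a))=\nabla(\mathsf d(a))$, where $U':\mathsf T(A)\otimes_A\mathsf T(A)\to\mathsf T^2(A)$ is the algebra map $w\otimes v\mapsto\mathsf T(\mathsf p_A)(w)\,v$ with $\mathsf T(\mathsf p_A)(a)=a$, $\mathsf T(\mathsf p_A)(\mathsf d a)=\mathsf d'(a)$ (so $\mathsf d(b)\otimes\mathsf d(c)\mapsto\mathsf d'(b)\mathsf d(c)$). The torsion of this affine connection (computed from the horizontal connection) is the algebra map $\mathsf V:\mathsf T(A)\to\mathsf T^2(A)$ with $\mathsf V(a)=a$ and $\mathsf V(\mathsf d(a))=\mathsf c_A\big(U'(\mathsf H_\nabla(\mathsf d'\mathsf d a))\big)-U'\big(\mathsf H_\nabla(\mathsf c_A(\mathsf d'\mathsf d a))\big)$; the connection is torsion-free if $\mathsf V(\mathsf d(a))=0$ for all $a\in A$. The torsion of $\nabla$ is $\widehat\nabla=\omega\circ\nabla:\Omega(A)\to\Omega^2(A)$ with $\omega(\alpha\otimes\beta)=\alpha\wedge\beta$. The map $\widehat\phi:\mathsf T^2(A)\to\Omega^2(A)$ is the additive map sending each monomial of the form $a\,\mathsf d(b)\mathsf d'(c)$ ($a,b,c\in A$) to $a\,\mathsf d(b)\wedge\mathsf d(c)$ and all monomials of other forms to $0$. *)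

(* Defs.v *)
(* Kähler modules, tensor products, exterior squares,
   symmetric algebras and tensor products of algebras are not in the
   library; they are specified here by their universal properties (they are
   therefore determined up to unique isomorphism), and the theorem is stated
   for every choice of such universal objects. *)
From HB Require Import structures.
From mathcomp Require Import all_boot all_order all_algebra.
Set Implicit Arguments.
Unset Strict Implicit.
Unset Printing Implicit Defensive.
Import GRing.Theory.
Local Open Scope ring_scope.

Definition additive_map (U V : zmodType) (f : U -> V) : Prop :=
  forall x y, f (x + y) = f x + f y.

Definition is_linear (S : pzRingType) (M N : lmodType S) (f : M -> N) : Prop :=
  additive_map f /\ (forall (k : S) x, f (k *: x) = k *: f x).

Definition is_bilinear (S : pzRingType) (M N P : lmodType S)
  (f : M -> N -> P) : Prop :=
  (forall y, is_linear (fun x => f x y)) /\ (forall x, is_linear (f x)).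

Definition is_ring_map (B C : pzRingType) (f : B -> C) : Prop :=
  additive_map f /\ (forall x y, f (x * y) = f x * f y) /\ f 1 = 1.

Definition is_alg_map (S : pzRingType) (B C : algType S) (f : B -> C) : Prop :=
  is_ring_map f /\ (forall (k : S) x, f (k *: x) = k *: f x).

(* [rho : R -> S] is the structure map of the R-algebra S.  An R-linear
   derivation D : S -> M (M an S-module) satisfying the Leibniz rule. *)
Definition is_derivation (R : comPzRingType) (S : comNzRingType)
  (rho : R -> S) (M : lmodType S) (D : S -> M) : Prop :=
  additive_map D /\
  (forall (r : R) (x : S), D (rho r * x) = rho r *: D x) /\
  (forall x y : S, D (x * y) = x *: D y + y *: D x).

Definition is_kahler (R : comPzRingType) (S : comNzRingType) (rho : R -> S)
  (Om : lmodType S) (d : S -> Om) : Prop :=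
  is_derivation rho d /\
  forall (M : lmodType S) (D : S -> M), is_derivation rho D ->
    exists f : Om -> M,
      [/\ is_linear f, (forall s, f (d s) = D s) &
          forall g : Om -> M, is_linear g -> (forall s, g (d s) = D s) ->
            forall x, g x = f x].

Definition is_tensor (S : pzRingType) (M N P : lmodType S)
  (t : M -> N -> P) : Prop :=
  is_bilinear t /\
  forall (Q : lmodType S) (f : M -> N -> Q), is_bilinear f ->
    exists g : P -> Q,
      [/\ is_linear g, (forall x y, g (t x y) = f x y) &
          forall h : P -> Q, is_linear h -> (forall x y, h (t x y) = f x y) ->
            forall z, h z = g z].

Definition is_ext_square (S : pzRingType) (M E : lmodType S)
  (w : M -> M -> E) : Prop :=
  [/\ is_bilinear w, (forall x, w x x = 0) &
  forall (Q : lmodType S) (f : M -> M -> Q), is_bilinear f ->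
    (forall x, f x x = 0) ->
    exists g : E -> Q,
      [/\ is_linear g, (forall x y, g (w x y) = f x y) &
          forall h : E -> Q, is_linear h -> (forall x y, h (w x y) = f x y) ->
            forall z, h z = g z]].

Definition is_sym_alg (S : comNzRingType) (M : lmodType S) (T : comAlgType S)
  (iota : M -> T) : Prop :=
  is_linear iota /\
  forall (B : comAlgType S) (f : M -> B), is_linear f ->
    exists g : T -> B,
      [/\ is_alg_map g, (forall x, g (iota x) = f x) &
          forall h : T -> B, is_alg_map h -> (forall x, h (iota x) = f x) ->
            forall z, h z = g z].

Definition is_alg_tensor (S : pzRingType) (B1 B2 T : comAlgType S)
  (i1 : B1 -> T) (i2 : B2 -> T) : Prop :=
  [/\ is_alg_map i1, is_alg_map i2 &
  forall (C : comAlgType S) (f1 : B1 -> C) (f2 : B2 -> C),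
    is_alg_map f1 -> is_alg_map f2 ->
    exists g : T -> C,
      [/\ is_alg_map g, (forall x, g (i1 x) = f1 x), (forall x, g (i2 x) = f2 x) &
          forall h : T -> C, is_alg_map h -> (forall x, h (i1 x) = f1 x) ->
            (forall x, h (i2 x) = f2 x) -> forall z, h z = g z]].

Definition is_module_connection (R : comPzRingType) (A : comAlgType R)
  (Om W : lmodType A) (d : A -> Om) (tens : Om -> Om -> W) (nabla : Om -> W)
  : Prop :=
  [/\ additive_map nabla,
      (forall (r : R) x, nabla ((r%:A : A) *: x) = (r%:A : A) *: nabla x) &
      (forall (a : A) x, nabla (a *: x) = a *: nabla x + tens (d a) x)].

(* generators d(b), d'(b), d'd(b) of T^2(A) over A *)
Inductive gen2 (A : Type) : Type :=
  | GD of A | GD' of A | GDD of A.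

Definition monomial2 (A : pzRingType) (T2 : pzRingType)
  (emb : A -> T2) (gval : gen2 A -> T2) (a : A) (s : seq (gen2 A)) : T2 :=
  emb a * \prod_(g <- s) gval g.

Definition form_d_d' (A : Type) (s : seq (gen2 A)) : Prop :=
  exists b c, s = [:: GD b; GD' c] \/ s = [:: GD' c; GD b].

(* torsion of the affine connection, evaluated at d(a):
   V(d a) = c_A(U'(H(d'd a))) - U'(H(c_A(d'd a))) *)
Definition torsionV (T2 TT : zmodType) (cA : T2 -> T2) (U' : TT -> T2)
  (H : T2 -> TT) (dd' : T2) : T2 :=
  cA (U' (H dd')) - U' (H (cA dd')).

(* the A-algebra structure of T^2(A) = Sym_{T(A)}(Omega(T(A))) *)
Definition T2emb (A : pzRingType) (TA : comAlgType A) (T2 : comAlgType TA)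
  (a : A) : T2 := ((a%:A : TA)%:A : T2).

Definition T2gen (A : pzRingType) (Om : lmodType A) (d : A -> Om)
  (TA : comAlgType A) (iota : Om -> TA) (OmT : lmodType TA) (d' : TA -> OmT)
  (T2 : comAlgType TA) (iota2 : OmT -> T2) (g : gen2 A) : T2 :=
  match g with
  | GD b => ((iota (d b))%:A : T2)
  | GD' b => iota2 (d' ((b%:A : TA)))
  | GDD b => iota2 (d' (iota (d b)))
  end.

(* Main.v *)
Require Import Defs.
From HB Require Import structures.
From mathcomp Require Import all_boot all_order all_algebra.
From Stdlib Require Import ClassicalEpsilon FunctionalExtensionality PropExtensionality.
Import GRing.Theory.
Local Open Scope ring_scope.

Record subm (K : pzRingType) (M : lmodType K) := Subm {
  spr : M -> Prop;
  spr0 : spr 0;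
  sprD : forall x y, spr x -> spr y -> spr (x + y);
  sprZ : forall k x, spr x -> spr (k *: x) }.
Arguments spr {K M}. Arguments spr0 {K M}. Arguments sprD {K M}. Arguments sprZ {K M}.

Section Quot.
Variables (K : pzRingType) (M : lmodType K) (s : subm K M).
Local Notation P := (spr s).
Let P0 : P 0 := spr0 s.
Let PD : forall x y, P x -> P y -> P (x + y) := sprD s.
Let PZ : forall k x, P x -> P (k *: x) := sprZ s.

Lemma PN x : P x -> P (- x).
Proof. by move=> h; rewrite -scaleN1r; apply: PZ. Qed.
Lemma PB x y : P x -> P y -> P (x - y).
Proof. by move=> hx hy; apply: PD => //; apply: PN. Qed.

Definition eqv (x y : M) := P (x - y).
Lemma eqv_refl x : eqv x x. Proof. by rewrite /eqv subrr. Qed.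
Lemma eqv_sym x y : eqv x y -> eqv y x.
Proof. by move=> h; rewrite /eqv -opprB; apply: PN. Qed.
Lemma eqv_trans x y z : eqv x y -> eqv y z -> eqv x z.
Proof. by move=> h1 h2; rewrite /eqv -(subrKA y); apply: PD. Qed.
Arguments eqv_trans {x y z}.
Lemma eqv_add x y x' y' : eqv x x' -> eqv y y' -> eqv (x + y) (x' + y').
Proof. move=> h1 h2; rewrite /eqv opprD addrACA; exact: PD. Qed.
Lemma eqv_opp x x' : eqv x x' -> eqv (- x) (- x').
Proof. by move=> h; rewrite /eqv -opprD; apply: PN. Qed.
Lemma eqv_scale k x x' : eqv x x' -> eqv (k *: x) (k *: x').
Proof. by move=> h; rewrite /eqv -scalerBr; apply: PZ. Qed.

Definition rep (x : M) : M := epsilon (inhabits x) (fun y => eqv x y).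
Lemma rep_spec x : eqv x (rep x).
Proof. exact: (epsilon_spec (inhabits x) (fun y => eqv x y) (ex_intro _ x (eqv_refl x))). Qed.
Lemma rep_eq x y : eqv x y -> rep x = rep y.
Proof.
move=> h; rewrite /rep.
have -> : (fun z => eqv x z) = (fun z => eqv y z).
  apply: functional_extensionality => z; apply: propositional_extensionality; split.
    by apply: eqv_trans; apply: eqv_sym.
  exact: eqv_trans.
by have -> : inhabits x = inhabits y by apply: proof_irrelevance.
Qed.
Lemma rep_idem x : rep (rep x) = rep x.
Proof. by apply: rep_eq; apply: eqv_sym; apply: rep_spec. Qed.

Definition Qt := {x : M | rep x == x}.
HB.instance Definition _ := Choice.on Qt.
Definition pi (x : M) : Qt := exist _ (rep x) (introT eqP (rep_idem x)).
Lemma pi_eq x y : eqv x y -> pi x = pi y.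
Proof. by move=> h; apply: val_inj => /=; apply: rep_eq. Qed.
Lemma valK (u : Qt) : pi (val u) = u.
Proof. by apply: val_inj => /=; apply/eqP; case: u. Qed.
Lemma val_pi x : eqv (val (pi x)) x.
Proof. by apply: eqv_sym; apply: rep_spec. Qed.
Lemma pi_eqv x y : pi x = pi y -> eqv x y.
Proof.
move=> h; apply: (eqv_trans (y:=rep x)); first exact: rep_spec.
apply: eqv_sym.
have : rep y = rep x by move: (congr1 val h) => /= ->.
by move=> <-; exact: rep_spec.
Qed.

Definition qzero : Qt := pi 0.
Definition qadd (u v : Qt) := pi (val u + val v).
Definition qopp (u : Qt) := pi (- val u).
Definition qscale k (u : Qt) := pi (k *: val u).

Lemma qaddA : associative qadd.
Proof.
move=> u v w; apply: pi_eq; apply: (eqv_trans (y := val u + (val v + val w))).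
  by apply: eqv_add; [exact: eqv_refl | exact: val_pi].
rewrite addrA; apply: eqv_add; [apply: eqv_sym; exact: val_pi | exact: eqv_refl].
Qed.
Lemma qaddC : commutative qadd.
Proof. by move=> u v; rewrite /qadd addrC. Qed.
Lemma qadd0 : left_id qzero qadd.
Proof.
move=> u; rewrite -[RHS]valK; apply: pi_eq.
rewrite -[X in eqv _ X]add0r; apply: eqv_add; [exact: val_pi | exact: eqv_refl].
Qed.
Lemma qaddN : left_inverse qzero qopp qadd.
Proof.
move=> u; apply: pi_eq; rewrite -(addNr (val u)).
apply: eqv_add; [exact: val_pi | exact: eqv_refl].
Qed.
HB.instance Definition _ := GRing.isZmodule.Build Qt qaddA qaddC qadd0 qaddN.

Lemma qscaleA a b v : qscale a (qscale b v) = qscale (a * b) v.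
Proof. apply: pi_eq; rewrite -scalerA; apply: eqv_scale; exact: val_pi. Qed.
Lemma qscale1 : left_id 1 qscale.
Proof. by move=> u; rewrite /qscale scale1r valK. Qed.
Lemma qscaleDr : right_distributive qscale +%R.
Proof.
move=> a u v; apply: pi_eq; rewrite /= /qadd.
apply: (eqv_trans (y := a *: (val u + val v))); first by apply: eqv_scale; exact: val_pi.
rewrite scalerDr.
apply: eqv_add; apply: eqv_sym; exact: val_pi.
Qed.
Lemma qscaleDl v : {morph qscale^~ v: a b / a + b}.
Proof.
move=> a b; apply: pi_eq; rewrite scalerDl; rewrite /= /qadd.
apply: eqv_add; exact: rep_spec.
Qed.
HB.instance Definition _ := GRing.Zmodule_isLmodule.Build K Qt qscaleA qscale1 qscaleDr qscaleDl.

Lemma pi_add x y : pi (x + y) = (pi x + pi y : Qt).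
Proof.
apply: pi_eq; rewrite /=; apply: eqv_sym; apply: eqv_add; exact: val_pi.
Qed.
Lemma pi_scale k x : pi (k *: x) = (k *: pi x : Qt).
Proof. apply: pi_eq; apply: eqv_sym; apply: eqv_scale; exact: val_pi. Qed.
Lemma pi0P x : pi x = (0 : Qt) -> P x.
Proof. by move=> /pi_eqv; rewrite /eqv subr0. Qed.
End Quot.

Lemma piP0 (K : pzRingType) (M : lmodType K) (s : subm K M) x :
  spr s x -> pi K M s x = 0.
Proof. by move=> h; apply: pi_eq; rewrite /eqv subr0. Qed.

Inductive span (K : pzRingType) (M : lmodType K) (G : M -> Prop) : M -> Prop :=
| span0 : span K M G 0
| spanG k g : G g -> span K M G (k *: g)
| spanD x y : span K M G x -> span K M G y -> span K M G (x + y).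
Arguments span {K M}. Arguments span0 {K M G}. Arguments spanG {K M G}.
Arguments spanD {K M G}.

Lemma span_scale (K : pzRingType) (M : lmodType K) (G : M -> Prop) k x :
  span G x -> span G (k *: x).
Proof.
elim=> [|k' g Hg|y z _ IH1 _ IH2].
- by rewrite scaler0; apply: span0.
- by rewrite scalerA; apply: spanG.
- by rewrite scalerDr; apply: spanD.
Qed.

Definition span_subm (K : pzRingType) (M : lmodType K) (G : M -> Prop) : subm K M :=
  @Subm K M (span G) span0 (@spanD K M G) (@span_scale K M G).
Arguments span_subm {K M}.

Lemma add0f (U V : zmodType) (f : U -> V) : additive_map f -> f 0 = 0.
Proof. by move=> h; move: (h 0 0); rewrite addr0 -{1}[f 0]addr0 => /addrI. Qed.
Arguments add0f {U V f}.
Lemma addNf (U V : zmodType) (f : U -> V) : additive_map f -> forall x, f (- x) = - f x.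
Proof.
move=> h x; apply: (addrI (f x)); by rewrite -h !subrr (add0f h).
Qed.
Arguments addNf {U V f}.
Lemma addBf (U V : zmodType) (f : U -> V) : additive_map f -> forall x y, f (x - y) = f x - f y.
Proof. by move=> h x y; rewrite h (addNf h). Qed.
Arguments addBf {U V f}.

Lemma tensor_span (S : pzRingType) (M N P : lmodType S) (t : M -> N -> P) :
  is_tensor t -> forall z, span (fun w => exists x y, w = t x y) z.
Proof.
case=> Hb Hu z.
pose s := span_subm (fun w => exists x y, w = t x y).
have bil0 : is_bilinear (fun (_ : M) (_ : N) => (0 : Qt S P s)).
  by split=> ?; split=> [? ?|? ?]; rewrite ?addr0 ?scaler0.
have [g [_ _ Hg]] := Hu (Qt S P s) _ bil0.
apply: (@pi0P _ _ s).
have linpi : is_linear (pi S P s).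
  by split=> [? ?|? ?]; rewrite ?pi_add ?pi_scale.
have -> := Hg (pi S P s) linpi.
  have lin0 : is_linear (fun _ : P => (0 : Qt S P s)).
    by split=> [? ?|? ?]; rewrite ?addr0 ?scaler0.
  by rewrite -(Hg _ lin0).
move=> x y; apply: piP0 => /=.
by rewrite -[t x y]scale1r; apply: spanG; exists x, y.
Qed.

Lemma kahler_span (R : comPzRingType) (S : comNzRingType) (rho : R -> S)
  (Om : lmodType S) (d : S -> Om) :
  is_kahler rho d -> forall z, span (fun w => exists b, w = d b) z.
Proof.
case=> Hd Hu z.
pose s := span_subm (fun w => exists b, w = d b).
have der0 : is_derivation rho (fun _ : S => (0 : Qt S Om s)).
  by split; [move=> ? ?; rewrite addr0 | split=> [? ?|? ?]; rewrite ?scaler0 ?addr0].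
have [g [_ _ Hg]] := Hu (Qt S Om s) _ der0.
apply: (@pi0P _ _ s).
have linpi : is_linear (pi S Om s).
  by split=> [? ?|? ?]; rewrite ?pi_add ?pi_scale.
have -> := Hg (pi S Om s) linpi.
  have lin0 : is_linear (fun _ : Om => (0 : Qt S Om s)).
    by split=> [? ?|? ?]; rewrite ?addr0 ?scaler0.
  by rewrite -(Hg _ lin0).
move=> b; apply: piP0 => /=.
by rewrite -[d b]scale1r; apply: spanG; exists b.
Qed.
Theorem mainTheorem14
  (R : comPzRingType) (A : comAlgType R)
  (* Kähler module Omega(A) over R with universal derivation d *)
  (Om : lmodType A) (d : A -> Om)
  (HOm : is_kahler (fun r : R => (r%:A : A)) d)
  (* Omega(A) (x)_A Omega(A) *)
  (W : lmodType A) (tens : Om -> Om -> W) (HW : is_tensor tens)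
  (* Omega^2(A) = Omega(A) /\_A Omega(A) *)
  (E : lmodType A) (wedge : Om -> Om -> E) (HE : is_ext_square wedge)
  (* omega(alpha (x) beta) = alpha /\ beta *)
  (omega : W -> E)
  (Homega : is_linear omega /\ (forall x y, omega (tens x y) = wedge x y))
  (* the module connection *)
  (nabla : Om -> W) (Hnabla : is_module_connection d tens nabla)
  (* T(A) = Sym_A(Omega(A)) *)
  (TA : comAlgType A) (iota : Om -> TA) (HTA : is_sym_alg iota)
  (* T^2(A) = T(T(A)) = Sym_{T(A)}(Omega(T(A))), d' the universal derivation *)
  (OmT : lmodType TA) (d' : TA -> OmT)
  (HOmT : is_kahler (fun r : R => ((r%:A : A)%:A : TA)) d')
  (T2 : comAlgType TA) (iota2 : OmT -> T2) (HT2 : is_sym_alg iota2)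
  (* T(p_A) : T(A) -> T^2(A),  a |-> a,  d a |-> d' a *)
  (Tp : TA -> T2)
  (HTp : [/\ is_ring_map Tp,
             (forall a : A, Tp (a%:A) = T2emb T2 a) &
             (forall a : A, Tp (iota (d a)) = T2gen d iota d' iota2 (GD' a))])
  (* T(A) (x)_A T(A) *)
  (TT : comAlgType A) (i1 i2 : TA -> TT) (HTT : is_alg_tensor i1 i2)
  (* U' : T(A) (x)_A T(A) -> T^2(A),  w (x) v |-> T(p_A)(w) v *)
  (U' : TT -> T2)
  (HU' : is_ring_map U' /\ (forall w v, U' (i1 w * i2 v) = Tp w * (v%:A : T2)))
  (* the inclusion Omega(A) (x)_A Omega(A) -> T(A) (x)_A T(A) *)
  (m : W -> TT)
  (Hm : is_linear m /\ (forall x y, m (tens x y) = i1 (iota x) * i2 (iota y)))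
  (* horizontal part H_nabla of the associated affine connection *)
  (H : T2 -> TT)
  (HH : is_ring_map H /\
        (forall a : A, H (T2gen d iota d' iota2 (GDD a)) = m (nabla (d a))))
  (* the canonical flip c_A *)
  (cA : T2 -> T2)
  (HcA : [/\ is_ring_map cA,
             (forall a : A, cA (T2emb T2 a) = T2emb T2 a),
             (forall a : A, cA (T2gen d iota d' iota2 (GD a))
                            = T2gen d iota d' iota2 (GD' a)),
             (forall a : A, cA (T2gen d iota d' iota2 (GD' a))
                            = T2gen d iota d' iota2 (GD a)) &
             (forall a : A, cA (T2gen d iota d' iota2 (GDD a))
                            = T2gen d iota d' iota2 (GDD a))])
  (* the map phi-hat : T^2(A) -> Omega^2(A) *)
  (phi : T2 -> E)
  (Hphi : [/\ additive_map phi,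
              (forall a b c : A,
                 phi (monomial2 (T2emb T2) (T2gen d iota d' iota2) a
                                [:: GD b; GD' c]) = a *: wedge (d b) (d c)) &
              (forall (a : A) (s : seq (gen2 A)), ~ form_d_d' s ->
                 phi (monomial2 (T2emb T2) (T2gen d iota d' iota2) a s) = 0)]) :
  forall a : A,
    (omega (nabla (d a))) *+ 2
    = phi (torsionV cA U' H (T2gen d iota d' iota2 (GDD a))).
Proof.
move=> a.
case: Homega => [[omA omZ] omT].
case: (HW) => [[HWl HWr] _].
case: HE => [[HEl HEr] HEalt _].
case: Hm => [[mA mZ] mT].
case: HU' => [[U'A [U'M U'1]] U'T].
case: HH => [[HA [HM H1]] HGDD].
case: HcA => [[cAA [cAM cA1]] cAemb cAGD cAGD' cAGDD].
case: HTp => [[TpA [TpM Tp1]] TpC TpGD].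
case: HTT => [[[i1A [i1M i11]] i1Z] _ _].
case: Hphi => [phiA phiM phi0].
set g := T2gen d iota d' iota2.
have wanti : forall x y, wedge y x = - wedge x y.
  move=> x y; apply/eqP; rewrite -addr_eq0 addrC; apply/eqP.
  have := HEalt (x + y).
  rewrite (proj1 (HEl _)) !(proj1 (HEr _)) !HEalt add0r addr0.
  by [].
pose Gw := fun t : W => exists b c, t = tens (d b) (d c).
have spT : forall x y, span Gw (tens x y).
  move=> x y; elim: (kahler_span _ _ _ _ _ HOm x) => [|k g0 [b ->]|x1 x2 _ IH1 _ IH2].
  - by rewrite (add0f (proj1 (HWl y))); apply: span0.
  - rewrite (proj2 (HWl y)); apply: span_scale.
    elim: (kahler_span _ _ _ _ _ HOm y) => [|k' g1 [c ->]|y1 y2 _ IH1 _ IH2].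
    + by rewrite (add0f (proj1 (HWr _))); apply: span0.
    + by rewrite (proj2 (HWr _)); apply: spanG; exists b, c.
    + by rewrite (proj1 (HWr _)); apply: spanD.
  - by rewrite (proj1 (HWl y)); apply: spanD.
have spW : forall t, span Gw t.
  move=> t; elim: (tensor_span _ _ _ _ _ HW t) => [|k g0 [x [y ->]]|x1 x2 _ IH1 _ IH2].
  - exact: span0.
  - exact: span_scale.
  - exact: spanD.
pose F := fun t => phi (cA (U' (m t))) - phi (U' (m t)).
have key : forall t, span Gw t -> omega t *+ 2 = F t.
  move=> t; elim=> [|k g0 [b [c ->]]|x1 x2 _ IH1 _ IH2].
  - by rewrite /F (add0f omA) (add0f mA) (add0f U'A) (add0f cAA) subrr mul0rn.
  - have eU : U' (m (k *: tens (d b) (d c)))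
        = T2emb T2 k * g (GD' b) * g (GD c).
      rewrite mZ mT scalerAl -i1Z U'T -[k *: iota (d b)]mulr_algl TpM TpC TpGD.
by [].
    rewrite /F eU !cAM cAemb cAGD cAGD'.
    have e1 : T2emb T2 k * g (GD b) * g (GD' c)
        = monomial2 (T2emb T2) g k [:: GD b; GD' c].
      by rewrite /monomial2 !big_cons big_nil mulr1 mulrA.
    have e2 : T2emb T2 k * g (GD' b) * g (GD c)
        = monomial2 (T2emb T2) g k [:: GD c; GD' b].
      by rewrite /monomial2 !big_cons big_nil mulr1 mulrA mulrAC.
    rewrite e1 e2 !phiM omZ omT (wanti (d b)) scalerN opprK mulr2n.
    by [].
  - by rewrite /F omA mulrnDl IH1 IH2 mA U'A cAA !phiA opprD addrACA.
rewrite /torsionV cAGDD HGDD key; last exact: spW.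
by rewrite /F (addBf phiA).
Qed.
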